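(* Under the standing assumptions, let $u\in X\setminus\{0\}$, $\zeta\in X^*\setminus\{0\}$ and $\lambda>0$. Then $u$ is a $p$-eigenvector of $J$ with subgradient $\zeta$ and eigenvalue $\lambda$ if and only if $\zeta$ is a $q$-eigenvector of $J^*$ with subgradient $u$ and eigenvalue $\mu=\lambda^{1-q}$.
   Context: Standing assumptions: $X$ is a real reflexive Banach space with dual $X^*$ and duality pairing $\langle\cdot,\cdot\rangle$; $\Gamma_0(X)$ is the class of proper, lower semi-continuous, convex functionals $X\to\mathbb{R}\cup\{+\infty\}$. Fix $1<p<\infty$ and $q=\frac{p}{p-1}$. Let $J\in\Gamma_0(X)$, and let $H\in\Gamma_0(X)$ be absolutely $p$-homogeneous ($H(tu)=|t|^pH(u)$) such that $|u|_H:=(pH(u))^{1/p}$ is a norm on $X$, so $H(u)=\frac1p|u|_H^p$. The dual norm is $|\zeta|_{H^*}=\sup_{u\ne0}\langle\zeta,u\rangle/|u|_H$, and $H^*(\zeta)=\frac1q|\zeta|_{H^*}^q$. The Fenchel conjugate is $J^*(\zeta)=\sup_{u\in X}\langle\zeta,u\rangle-J(u)$ and the subdifferential is $\partial J(u)=\{\zeta\in X^*:\ J(u)+\langle\zeta,v-u\rangle\le J(v)\ \forall v\in X\}$. Growth assumption: there is $c>0$ with $H(u)\le cJ(u)$ for all $u\in X$. The Rayleigh quotient is $R(u)=J(u)/H(u)$ for $u\ne0$ and the dual Rayleigh quotient is $R_*(\zeta)=J^*(\zeta)/H^*(\zeta)$ for $\zeta\ne0$. A $p$-eigenvector of $J$: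 $u\in X\setminus\{0\}$ with subgradient $\zeta\in\partial J(u)$ and eigenvalue $\lambda=R(u)\in\mathbb{R}$ such that $\zeta\in\lambda\,\partial H(u)$. A $q$-eigenvector of $J^*$: $\zeta\in X^*\setminus\{0\}$ with subgradient $u\in\partial J^*(\zeta)$ and eigenvalue $\mu=R_*(\zeta)\in\mathbb{R}$ such that $u\in\mu\,\partial H^*(\zeta)$. *)

(* Defs.v *)
From HB Require Import structures.
From mathcomp Require Import all_boot all_order all_algebra.
From mathcomp Require Import all_classical all_reals all_analysis.
Set Implicit Arguments. Unset Strict Implicit. Unset Printing Implicit Defensive.
Import Order.TTheory GRing.Theory Num.Theory.
Import numFieldNormedType.Exports.
Local Open Scope classical_set_scope.
Local Open Scope ring_scope.

(* Elements of X^* are represented as functions X -> R that are linear and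
   continuous; the duality pairing <zeta, u> is application zeta u.         *)
Definition in_dual {R : realType} {X : normedModType R} (zeta : X -> R) : Prop :=
  (forall (a : R) (x y : X), zeta (a *: x + y) = a * zeta x + zeta y)
  /\ continuous zeta.

Definition dual_norm {R : realType} {X : normedModType R} (zeta : X -> R) : R :=
  sup [set `|zeta x| | x in [set x : X | `|x| <= 1]].

Definition reflexive_space {R : realType} (X : normedModType R) : Prop :=
  forall phi : (X -> R) -> R,
    (forall (a : R) (z1 z2 : X -> R), in_dual z1 -> in_dual z2 ->
        phi (fun x => a * z1 x + z2 x) = a * phi z1 + phi z2) ->
    (exists C : R, forall z, in_dual z -> `|phi z| <= C * dual_norm z) ->
    exists u : X, forall z, in_dual z -> phi z = z u.

Local Open Scope ereal_scope.

Definition proper_fun {R : realType} {X : normedModType R} (J : X -> \bar R) : Prop :=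
  (exists u, J u < +oo) /\ (forall u, J u != -oo).

Definition convex_efun {R : realType} {X : normedModType R} (J : X -> \bar R) : Prop :=
  forall (t : R) (u v : X), (0 <= t <= 1)%R ->
    J (((1 - t) *: u + t *: v)%R) <= (1 - t)%R%:E * J u + t%:E * J v.

Definition Gamma0 {R : realType} {X : normedModType R} (J : X -> \bar R) : Prop :=
  proper_fun J /\ lower_semicontinuous J /\ convex_efun J.

Definition fconj {R : realType} {X : normedModType R} (J : X -> \bar R)
    (zeta : X -> R) : \bar R :=
  ereal_sup [set (zeta u)%:E - J u | u in [set: X]].

Definition subdiff {R : realType} {X : normedModType R} (J : X -> \bar R)
    (u : X) (zeta : X -> R) : Prop :=
  in_dual zeta /\ forall v : X, J u + (zeta (v - u)%R)%:E <= J v.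

(* u \in \partial F(zeta) for F : X^* -> R \cup {+oo}, where the subgradients
   live in X^{**}, identified with X by reflexivity *)
Definition subdiff_dual {R : realType} {X : normedModType R}
    (F : (X -> R) -> \bar R) (zeta : X -> R) (u : X) : Prop :=
  forall eta : X -> R, in_dual eta -> F zeta + (eta u - zeta u)%R%:E <= F eta.

Definition rayleigh_is {R : realType} (Ju Hu : \bar R) (lam : R) : Prop :=
  Ju \is a fin_num /\ Hu \is a fin_num /\ Hu != 0 /\ lam = (fine Ju / fine Hu)%R.

Definition p_eigen {R : realType} {X : normedModType R} (J H : X -> \bar R)
    (u : X) (zeta : X -> R) (lam : R) : Prop :=
  (u != 0)%R /\ subdiff J u zeta /\ rayleigh_is (J u) (H u) lam /\
  exists eta : X -> R, subdiff H u eta /\ zeta = (fun x => lam * eta x)%R.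

Definition q_eigen {R : realType} {X : normedModType R} (J H : X -> \bar R)
    (zeta : X -> R) (u : X) (mu : R) : Prop :=
  in_dual zeta /\ zeta <> (fun _ => 0%R) /\ subdiff_dual (fconj J) zeta u /\
  rayleigh_is (fconj J zeta) (fconj H zeta) mu /\
  exists w : X, subdiff_dual (fconj H) zeta w /\ u = (mu *: w)%R.

Definition abs_p_homogeneous {R : realType} {X : normedModType R}
    (p : R) (H : X -> \bar R) : Prop :=
  forall (t : R) (u : X), H (t *: u)%R = (`|t| `^ p)%:E * H u.

Definition H_norm {R : realType} {X : normedModType R} (p : R) (H : X -> \bar R)
    (u : X) : R := ((p * fine (H u)) `^ p^-1)%R.

Definition H_is_norm {R : realType} {X : normedModType R} (p : R)
    (H : X -> \bar R) : Prop :=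
  (forall u, H u \is a fin_num) /\
  (forall u, 0 <= p * fine (H u))%R /\
  (forall u, H_norm p H u = 0%R -> u = 0%R) /\
  (forall (a : R) u, H_norm p H (a *: u)%R = (`|a| * H_norm p H u)%R) /\
  (forall u v, (H_norm p H (u + v)%R <= H_norm p H u + H_norm p H v)%R).

(* Main.v *)
Require Import Defs.
From HB Require Import structures.
From mathcomp Require Import all_boot all_order all_algebra.
From mathcomp Require Import all_classical all_reals all_analysis.
From mathcomp Require Import ring lra.
Import Order.TTheory GRing.Theory Num.Theory.
Import numFieldNormedType.Exports.
Local Open Scope classical_set_scope.
Local Open Scope ring_scope.

Set Implicit Arguments. Unset Strict Implicit.

Section HBsec.
Variables (R : realType) (V : lmodType R) (q : V -> R).
Hypothesis q0 : q 0 = 0.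
Hypothesis qconv : forall (t : R) x y, 0 <= t <= 1 ->
  q ((1 - t) *: x + t *: y) <= (1 - t) * q x + t * q y.

Definition Pgood (G : set (V * R)) :=
  [/\ (forall x a b, G (x,a) -> G (x,b) -> a = b),
      (forall s x a y b, G (x,a) -> G (y,b) -> G (s *: x + y, s * a + b)) &
      (forall x a, G (x,a) -> a <= q x)].

Lemma Pgood_chain (F : set (set (V * R))) : F `<=` Pgood -> total_on F subset ->
  Pgood (\bigcup_(X in F) X).
Proof.
move=> FP tot; split.
- move=> x a b [G1 FG1 G1a] [G2 FG2 G2b].
  have [s12|s21] := tot _ _ FG1 FG2.
  + by have [f _ _] := FP _ FG2; apply: f (s12 _ G1a) G2b.
  + by have [f _ _] := FP _ FG1; apply: f G1a (s21 _ G2b).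
- move=> s x a y b [G1 FG1 G1a] [G2 FG2 G2b].
  have [s12|s21] := tot _ _ FG1 FG2.
  + by exists G2 => //; have [_ l _] := FP _ FG2; apply: l (s12 _ G1a) G2b.
  + by exists G1 => //; have [_ l _] := FP _ FG1; apply: l G1a (s21 _ G2b).
- by move=> x a [G FG Ga]; have [_ _ d] := FP _ FG; apply: d.
Qed.

Lemma hahn_banach_convex : exists f : V -> R,
  (forall a x y, f (a *: x + y) = a * f x + f y) /\ (forall x, f x <= q x).
Proof.
have [A [[Af Al Ad] Amax]] := Zorn_bigcup Pgood_chain.
have A00 : A (0, 0).
  apply: contrapT => nA0.
  have AE : forall z, ~ A z.
    move=> [x a] Axa; apply: nA0.
    have := Al (-1) _ _ _ _ Axa Axa.
    by rewrite scaleN1r addNr mulN1r addNr.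
  apply: (Amax [set (0 : V, 0 : R)]).
    split; first by move=> z /AE.
    by move=> /(_ (0,0) erefl).
  split.
  - by move=> x a b [_ ->] [_ ->].
  - by move=> s x a y b [-> ->] [-> ->]; rewrite scaler0 addr0 mulr0 addr0.
  - by move=> x a [-> ->]; rewrite q0.
have Adom : forall x0, exists a, A (x0, a).
  move=> x0; apply: contrapT => nx0.
  have nA : forall a, ~ A (x0, a) by move=> a Aa; apply: nx0; exists a.
  pose L := [set l | exists y b t, [/\ A (y, b), 0 < t & l = (b - q (y - t *: x0)) / t]].
  pose U := [set r | exists y b s, [/\ A (y, b), 0 < s & r = (q (y + s *: x0) - b) / s]].
  have LU : forall l r, L l -> U r -> l <= r.
    move=> _ _ [y [b [t [Ayb t0 ->]]]] [y' [b' [s [Ayb' s0 ->]]]].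
    rewrite ler_pdivrMr // mulrAC ler_pdivlMr //.
    pose th := t / (s + t).
    have st0 : 0 < s + t by rewrite addr_gt0.
    have th01 : 0 <= th <= 1.
      apply/andP; split; first by rewrite divr_ge0 // ltW.
      by rewrite ler_pdivrMr // mul1r lerDr ltW.
    have e1 : 1 - th = s / (s + t).
      by rewrite /th -[1](@divff _ (s + t)) ?gt_eqF // -mulrBl addrK.
    have Az : A ((1 - th) *: y + th *: y', (1 - th) * b + th * b').
      apply: (Al) => //.
      by have := Al th _ _ _ _ Ayb' A00; rewrite addr0 addr0.
    have := qconv (y - t *: x0) (y' + s *: x0) th01.
    have -> : (1 - th) *: (y - t *: x0) + th *: (y' + s *: x0) =
              (1 - th) *: y + th *: y'.
      rewrite !scalerDr !scalerN !scalerA e1 /th.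
      have -> : s / (s + t) * t = t / (s + t) * s by ring.
      by rewrite addrACA addrC addrA addNr add0r addrC.
    move=> /(le_trans (Ad _ _ Az)) h.
    have hk : (s + t) * th = t by rewrite /th mulrC divfK ?gt_eqF.
    have hk' : (s + t) * (1 - th) = s by rewrite mulrBr mulr1 hk addrK.
    have := h; rewrite -(ler_pM2l st0) !mulrDr !mulrA hk'.
    rewrite !(mulrAC (s+t) t) divff ?gt_eqF // !mul1r => h2.
    nra.
  have L0 : L (- q (- x0)).
    by exists 0, 0, 1; split => //; rewrite sub0r scale1r divr1; rewrite ?oppr0 ?subr0 ?mulN1r ?sub0r ?divr1.
  have U0 : U (q x0).
    by exists 0, 0, 1; split => //; rewrite add0r scale1r subr0 divr1.
  pose c := sup L.
  have Lc : forall l, L l -> l <= c.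
    by move=> l Ll; apply: ub_le_sup => //; exists (q x0) => r Lr; apply: LU U0.
  have cU : forall r, U r -> c <= r.
    by move=> r Ur; apply: ge_sup; [exists (- q (- x0)) | move=> l Ll; apply: LU Ur].
  pose B := [set z | exists y b t, A (y, b) /\ z = (y + t *: x0, b + t * c)].
  apply: (Amax B).
    split.
      move=> [x a] Axa; exists x, a, 0; split => //.
      by rewrite scale0r addr0 mul0r addr0.
    move=> /(_ (x0, c)) BA; apply: (nA c); apply: BA.
    exists 0, 0, 1; split => //; by rewrite scale1r add0r mul1r add0r.
  split.
  - move=> x a a' [y1 [b1 [t1 [A1 [-> ->]]]]] [y2 [b2 [t2 [A2 [e ->]]]]].
    have [t12|t12] := eqVneq t1 t2.
      subst t2; have ey : y1 = y2 by apply: (addIr (t1 *: x0)).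
      by subst y2; rewrite (Af _ _ _ A1 A2).
    exfalso; apply: (nA ((t1 - t2)^-1 * (b2 - b1))).
    have Ad' := Al (t1 - t2)^-1 _ _ _ _ (Al (-1) _ _ _ _ A1 A2) A00.
    rewrite addr0 addr0 scaleN1r mulN1r in Ad'.
    have -> : x0 = (t1 - t2)^-1 *: (- y1 + y2).
      apply: (scalerI (a := t1 - t2)); first by rewrite subr_eq0.
      rewrite scalerA mulfV ?subr_eq0 // scale1r.
      have -> : y2 = y1 + t1 *: x0 - t2 *: x0 by rewrite e addrK.
      by rewrite scalerBl addrA addKr.
    by move: Ad'; rewrite (addrC (- b1)).
  - move=> s x a y b [y1 [b1 [t1 [A1 [-> ->]]]]] [y2 [b2 [t2 [A2 [-> ->]]]]].
    exists (s *: y1 + y2), (s * b1 + b2), (s * t1 + t2); split; first exact: Al.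
    congr (_, _).
      rewrite !scalerDr scalerDl scalerA.
      by rewrite addrACA.
    by rewrite !mulrDr mulrDl mulrA; ring.
  - move=> x a [y [b [t [Ayb [-> ->]]]]].
    have [t0|t0|->] := ltgtP t 0.
    + have : L ((b - q (y - (- t) *: x0)) / (- t)).
        by exists y, b, (- t); split => //; rewrite oppr_gt0.
      move/Lc; rewrite scaleNr opprK ler_pdivrMr ?oppr_gt0 // => h.
      by move: h; rewrite mulrN; lra.
    + have : U ((q (y + t *: x0) - b) / t) by exists y, b, t.
      move/cU; rewrite ler_pdivlMr // => h; lra.
    + by rewrite scale0r addr0 mul0r addr0; apply: (Ad).
pose f x := projT1 (cid (Adom x)).
have fP x : A (x, f x) by rewrite /f; case: cid.
exists f; split.
  by move=> a x y; apply: (Af (a *: x + y)); [apply: fP | apply: (Al); apply: fP].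
by move=> x; apply: (Ad); apply: fP.
Qed.
End HBsec.

Unset Implicit Arguments. Set Strict Implicit.

Section FMsec.
Variables (R : realType) (X : normedModType R) (F : X -> \bar R).
Hypothesis F0 : forall x, (0 <= F x)%E.
Hypothesis Fprop : exists y, (F y < +oo)%E.
Hypothesis Fconv : convex_efun F.

Section K.
Variable k : R.
Hypothesis k0 : 0 < k.

Definition Sk x := [set r | exists y, F y \is a fin_num /\ r = fine (F y) + k * `|x - y|].
Definition Fk x := inf (Sk x).

Lemma fine_ge0 y : 0 <= fine (F y).
Proof. by apply: fine_ge0. Qed.

Lemma Sk_ne x : Sk x !=set0.
Proof.
case: Fprop => y Fy; exists (fine (F y) + k * `|x - y|); exists y; split => //.
by rewrite ge0_fin_numE.
Qed.

Lemma Sk_lb x : has_lbound (Sk x).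
Proof.
exists 0 => _ [y [_ ->]]; apply: addr_ge0; first exact: fine_ge0.
by rewrite mulr_ge0 // ltW.
Qed.

Lemma Fk_le x y : F y \is a fin_num -> Fk x <= fine (F y) + k * `|x - y|.
Proof. by move=> Fy; apply: ge_inf; [exact: Sk_lb | exists y]. Qed.

Lemma Fk_lip x x' : Fk x <= Fk x' + k * `|x - x'|.
Proof.
rewrite -lerBlDr; apply: lb_le_inf; first exact: Sk_ne.
move=> _ [y [Fy ->]]; rewrite lerBlDr.
apply: (le_trans (Fk_le x y Fy)).
rewrite -addrA lerD2l -mulrDr ler_pM2l //.
by rewrite [leRHS]addrC; apply: ler_distD.
Qed.

Lemma Fk_ge0 x : 0 <= Fk x.
Proof.
apply: lb_le_inf; first exact: Sk_ne.
move=> _ [y [_ ->]]; apply: addr_ge0; first exact: fine_ge0.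
by rewrite mulr_ge0 // ltW.
Qed.

Lemma Fk_leF x : F x \is a fin_num -> Fk x <= fine (F x).
Proof. by move=> Fx; have := Fk_le x x Fx; rewrite subrr normr0 mulr0 addr0. Qed.

Lemma Fk_conv (t : R) x1 x2 : 0 <= t <= 1 ->
  Fk ((1 - t) *: x1 + t *: x2) <= (1 - t) * Fk x1 + t * Fk x2.
Proof.
move=> /andP[t0 t1].
apply/ler_addgt0Pr => e e0.
have [r1 [y1 [Fy1 ->]] h1] := inf_adherent e0 (conj (Sk_ne x1) (Sk_lb x1)).
have [r2 [y2 [Fy2 ->]] h2] := inf_adherent e0 (conj (Sk_ne x2) (Sk_lb x2)).
have Fc : (F ((1 - t) *: y1 + t *: y2)%R <= ((1 - t) * fine (F y1) + t * fine (F y2))%:E)%E.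
  have := Fconv t y1 y2; rewrite t0 t1 => /(_ isT).
  by rewrite -(fineK Fy1) -(fineK Fy2) -!EFinM -EFinD.
have Fcf : F ((1 - t) *: y1 + t *: y2) \is a fin_num.
  by rewrite ge0_fin_numE //; apply: le_lt_trans Fc _; apply: ltey.
apply: (le_trans (Fk_le _ _ Fcf)).
have -> : (1 - t) *: x1 + t *: x2 - ((1 - t) *: y1 + t *: y2) =
          (1 - t) *: (x1 - y1) + t *: (x2 - y2).
  by rewrite !scalerBr addrACA opprD.
have Hn : `|(1 - t) *: (x1 - y1) + t *: (x2 - y2)| <= (1 - t) * `|x1 - y1| + t * `|x2 - y2|.
  apply: (le_trans (ler_normD _ _)).
  by rewrite !normrZ !ger0_norm // subr_ge0.
have Hf : fine (F ((1 - t) *: y1 + t *: y2)) <= (1 - t) * fine (F y1) + t * fine (F y2).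
  by rewrite -lee_fin fineK.
have t1' : 0 <= 1 - t by rewrite subr_ge0.
have A1 := ler_wpM2l t1' (ltW h1).
have A2 := ler_wpM2l t0 (ltW h2).
have Hk := ler_wpM2l (ltW k0) Hn.
nra.
Qed.

End K.

Hypothesis Flsc : lower_semicontinuous F.

Lemma FM_core u s : (s%:E < F u)%E -> exists eta : X -> R,
  in_dual eta /\ forall v, ((s + eta (v - u))%:E <= F v)%E.
Proof.
move=> su.
have [V nV HV] := Flsc _ _ su.
have /nbhs_ballP [d /= d0 dV] := nV.
pose k := (`|s| + 1) / d.
have s1 : 0 < `|s| + 1 by have := normr_ge0 s; lra.
have k0 : 0 < k by rewrite divr_gt0.
have sFk : s <= Fk k u.
  apply: lb_le_inf; first exact: Sk_ne.
  move=> _ [y [Fy ->]].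
  have kn : 0 <= k * `|u - y| by rewrite mulr_ge0 // ltW.
  have [uy|uy] := ltP (`|u - y|) d.
  - have : (s%:E < F y)%E by apply: HV; apply: dV; rewrite -ball_normE /ball_ /=.
    rewrite -(fineK Fy) lte_fin => h; lra.
  - have kd : k * d = `|s| + 1 by rewrite /k divfK ?gt_eqF.
    have := ler_wpM2l (ltW k0) uy.
    have := fine_ge0 y; have := ler_norm s; lra.
pose q x := Fk k (u + x) - Fk k u.
have q0 : q 0 = 0 by rewrite /q addr0 subrr.
have qconv : forall (t : R) x y, 0 <= t <= 1 ->
    q ((1 - t) *: x + t *: y) <= (1 - t) * q x + t * q y.
  move=> t x y t01; rewrite /q.
  have -> : u + ((1 - t) *: x + t *: y) = (1 - t) *: (u + x) + t *: (u + y).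
    by rewrite !scalerDr addrACA -scalerDl subrK scale1r.
  have := @Fk_conv k k0 t (u + x) (u + y) t01; nra.
have [f [fl fq]] := hahn_banach_convex q0 qconv.
have f0 : f 0 = 0 by have := fl 1 0 0; rewrite scale1r addr0 mul1r; lra.
have fN x : f (- x) = - f x.
  by have := fl (-1) x 0; rewrite scaleN1r addr0 f0 addr0 mulN1r.
have fB a b : f (a - b) = f a - f b by have := fl 1 a (- b); rewrite scale1r mul1r fN.
have fk x : f x <= k * `|x|.
  apply: (le_trans (fq x)); rewrite /q lerBlDl.
  by have := @Fk_lip k k0 (u + x) u; rewrite addrC addrK.
have fa x : `|f x| <= k * `|x|.
  rewrite ler_norml fk andbT lerNl -fN; by have := fk (- x); rewrite normrN.
exists f; split.
  split; first exact: fl.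
  move=> x; apply/cvgrPdist_le => e e0.
  apply/nbhs_ballP; exists (e / k) => /=; first by rewrite divr_gt0.
  move=> y; rewrite -ball_normE /ball_ /= => xy.
  rewrite -fB; apply: (le_trans (fa _)).
  by have := ltW xy; rewrite ler_pdivlMr // mulrC.
move=> v.
have := F0 v; case Fv : (F v) => [r| |] //= _.
have Fvf : F v \is a fin_num by rewrite Fv.
have := @Fk_leF k k0 v Fvf; rewrite Fv /= => h.
have := fq (v - u); rewrite /q (addrC u (v - u)) subrK => h2.
rewrite lee_fin; lra.
exact: leey.
Qed.

Lemma dual_B (zeta : X -> R) : in_dual zeta -> forall a b, zeta (a - b) = zeta a - zeta b.
Proof.
move=> [zl _] a b.
have z0 : zeta 0 = 0 by have := zl 1 0 0; rewrite scale1r addr0 mul1r => h; lra.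
have zN : zeta (- b) = - zeta b.
  by have := zl (-1) b 0; rewrite scaleN1r addr0 z0 addr0 mulN1r.
by have := zl 1 a (- b); rewrite scale1r mul1r zN.
Qed.

Lemma FM_subdiff (zeta : X -> R) u : in_dual zeta ->
  fconj F zeta \is a fin_num -> subdiff_dual (fconj F) zeta u ->
  subdiff F u zeta /\ F u = (zeta u - fine (fconj F zeta))%:E.
Proof.
move=> dz fz Hsub.
set c := fine (fconj F zeta).
have Ec : fconj F zeta = c%:E by rewrite /c fineK.
have key : forall s, (s%:E < F u)%E -> s <= zeta u - c.
  move=> s /FM_core [eta [deta Heta]].
  have H1 : (fconj F eta <= (eta u - s)%:E)%E.
    apply: ge_ereal_sup => _ [v _ <-].
    have := Heta v; have := F0 v; case: (F v) => [r| |] //= _.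
    - rewrite lee_fin (dual_B _ deta) => h.
      rewrite -EFinB lee_fin; lra.
    - by move=> _; rewrite addeNy leNye.
  have := Hsub eta deta; rewrite Ec => H2.
  have := le_trans H2 H1; rewrite -EFinD lee_fin; lra.
have Fule : (F u <= (zeta u - c)%:E)%E.
  have := F0 u; case Fu: (F u) => [r| |] // _.
  - rewrite lee_fin leNgt; apply/negP => h.
    have : (((zeta u - c + r) / 2)%:E < r%:E)%E by rewrite lte_fin; lra.
    rewrite -Fu => /key; lra.
  - have h : ((zeta u - c + 1)%R%:E < F u)%E by rewrite Fu ltry.
    exfalso; have := key _ h; lra.
have Fuge : ((zeta u - c)%:E <= F u)%E.
  have : ((zeta u)%:E - F u <= c%:E)%E.
    by rewrite -Ec; apply: ereal_sup_ubound; exists u.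
  have := F0 u; case: (F u) => [r| |] //= _.
  by rewrite -EFinB !lee_fin => h; lra.
  by move=> _; apply: leey.
have Fue : F u = (zeta u - c)%:E by apply/le_anti; rewrite Fule Fuge.
split => //; split => // v.
rewrite Fue.
have : ((zeta v)%:E - F v <= c%:E)%E.
  by rewrite -Ec; apply: ereal_sup_ubound; exists v.
have := F0 v; case: (F v) => [r| |] //= _.
- by rewrite -EFinB -EFinD !lee_fin (dual_B _ dz) => h; lra.
- by move=> _; apply: leey.
Qed.

Lemma FY_eq (zeta : X -> R) u : subdiff F u zeta -> F u \is a fin_num ->
  fconj F zeta = (zeta u - fine (F u))%:E.
Proof.
move=> [dz Hs] Fu.
apply/le_anti/andP; split.
  apply: ge_ereal_sup => _ [v _ <-].
  have := Hs v; rewrite -(fineK Fu).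
  have := F0 v; case: (F v) => [r| |] //= _.
  - by rewrite -EFinD -EFinB !lee_fin (dual_B _ dz) => h; lra.
  - by move=> _; rewrite addeNy leNye.
apply: le_trans (ereal_sup_ubound _); last by exists u.
by rewrite -(fineK Fu) -EFinB.
Qed.

Lemma FY_sub (zeta : X -> R) u : subdiff F u zeta -> F u \is a fin_num ->
  subdiff_dual (fconj F) zeta u.
Proof.
move=> hs Fu eta deta; rewrite (FY_eq _ _ hs Fu).
apply: le_trans (ereal_sup_ubound _); last by exists u.
rewrite -(fineK Fu) -EFinB -EFinD lee_fin; lra.
Qed.

End FMsec.

Set Implicit Arguments. Unset Strict Implicit.

Lemma dual_Z (R : realType) (X : normedModType R) (zeta : X -> R) :
  in_dual zeta -> forall (c : R) x, zeta (c *: x) = c * zeta x.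
Proof.
move=> [zl _] c x.
have z0 : zeta 0 = 0 by have := zl 1 0 0; rewrite scale1r addr0 mul1r => h; lra.
by have := zl c x 0; rewrite addr0 z0 addr0.
Qed.

Lemma powR_lt_self (R : realType) (a p : R) : 0 < a < 1 -> 1 < p -> a `^ p < a.
Proof.
move=> /andP[a0 a1] p1.
rewrite /powR gt_eqF //.
have la : ln a < 0 by apply: ln_lt0; rewrite a0 a1.
rewrite -[X in _ < X](@lnK _ a) ?posrE // ltr_expR.
nra.
Qed.

Section Hsec.
Variables (R : realType) (X : normedModType R) (p : R) (H : X -> \bar R).
Hypothesis p1 : 1 < p.
Hypothesis Hhom : abs_p_homogeneous p H.
Hypothesis Hfin : forall u, H u \is a fin_num.

Definition hf x := fine (H x).
Lemma HE x : H x = (hf x)%:E.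
Proof. by rewrite /hf fineK. Qed.

Lemma hf_scale t x : hf (t *: x) = `|t| `^ p * hf x.
Proof. by rewrite /hf Hhom (HE x) -EFinM. Qed.

Lemma scale_sub (a : R) w eta : 0 < a -> subdiff H w eta ->
  subdiff H (a *: w) (fun x => a `^ (p - 1) * eta x).
Proof.
move=> a0 [[el ec] hs]; split.
  split; first by move=> b x y; rewrite el; ring.
  by move=> x; apply: cvgMl_tmp; exact: ec.
move=> v.
have de : in_dual eta by [].
have := hs (a^-1 *: v).
rewrite !HE -!EFinD !lee_fin !hf_scale.
have e1 : a^-1 *: v - w = a^-1 *: (v - a *: w).
  by rewrite scalerBr scalerA mulVf ?gt_eqF // scale1r.
rewrite e1 (@dual_Z _ _ _ de) gtr0_norm ?invr_gt0 // gtr0_norm // => h.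
have AB : a `^ p * a^-1 `^ p = 1.
  by rewrite -powRM ?invr_ge0 ?ltW // divff ?gt_eqF // powR1.
have Ap : a `^ (p - 1) = a `^ p * a^-1.
  by rewrite powRB ?implybT ?gt_eqF // powRr1 ?ltW.
have := ler_wpM2l (powR_ge0 a p) h.
rewrite mulrA AB mul1r Ap mulrDr => h2.
have -> : a `^ p * a^-1 * eta (v - a *: w) = a `^ p * (a^-1 * eta (v - a *: w)) by ring.
exact: h2.
Qed.
End Hsec.


Unset Implicit Arguments. Set Strict Implicit.
Theorem theorem2p1 (R : realType) (X : completeNormedModType R)
  (p : R) (J H : X -> \bar R) (c : R) (u : X) (zeta : X -> R) (lam : R) :
  reflexive_space X ->
  1 < p ->
  Gamma0 J -> Gamma0 H ->
  abs_p_homogeneous p H -> H_is_norm p H ->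
  0 < c -> (forall v : X, (H v <= c%:E * J v)%E) ->
  u != 0 -> in_dual zeta -> zeta <> (fun _ => 0) -> 0 < lam ->
  (p_eigen J H u zeta lam <->
   q_eigen J H zeta u (lam `^ (1 - p / (p - 1)))).
Proof.
move=> _ p1 [[Jpr Jnm] [Jlsc Jcv]] [[Hpr _] [Hlsc Hcv]] Hhom
  [Hfin [Hge [Hn0 _]]] c0 Hc u0 dz z0 lam0.
set q := p / (p - 1).
have p0 : 0 < p by apply: lt_trans p1.
have pm1 : p - 1 != 0 by rewrite subr_eq0 gt_eqF.
have hf0 x : 0 <= hf H x.
  by have := Hge x; rewrite pmulr_rge0.
have H0 x : (0 <= H x)%E by rewrite (HE Hfin x) lee_fin.
have J0 x : (0 <= J x)%E.
  have := Hc x; have := Jnm x; case: (J x) => [r| |] // _.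
  - rewrite (HE Hfin x) -EFinM !lee_fin => h.
    by have := le_trans (hf0 x) h; rewrite pmulr_rge0.
have hu0 : 0 < hf H u.
  rewrite lt_neqAle hf0 andbT; apply/negP => /eqP h; apply: (negP u0); apply/eqP.
  by apply: Hn0; rewrite /H_norm -/(hf H u) -h mulr0 powR0 // invr_neq0 ?gt_eqF.
have e1 : (q - 1) * (p - 1) = 1 by rewrite /q; field.
have e2 : (q - 1) * p = q by rewrite /q; field.
have e3 : (1 - q) * (p - 1) = -1 by rewrite /q; field.
have e4 : (1 - q) * (1 - p) = 1 by rewrite /q; field.
have lamn0 : lam != 0 by rewrite gt_eqF.
set mu := lam `^ (1 - q).
have mu0 : 0 < mu by apply: powR_gt0.
split.
- case=> _ [sJ [[Jfin [_ [_ lamE]]] [eta0 [sH zE]]]].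
  have de0 : in_dual eta0 by case: sH.
  pose a := lam `^ (q - 1).
  have a0 : 0 < a by apply: powR_gt0.
  have aP : a `^ (p - 1) = lam by rewrite /a -powRrM e1 powRr1 ?ltW.
  have sHw : subdiff H (a *: u) zeta.
    by have := scale_sub p1 Hhom Hfin a0 sH; rewrite aP -zE.
  have Js := @FY_eq R X J J0 zeta u sJ Jfin.
  have Hs := @FY_eq R X H H0 zeta (a *: u) sHw (Hfin _).
  have zu : zeta u = lam * eta0 u by rewrite zE.
  have zau : zeta (a *: u) = lam * a * eta0 u by rewrite (dual_Z dz) zu; ring.
  have hau : hf H (a *: u) = a `^ p * hf H u by rewrite (hf_scale Hhom Hfin) gtr0_norm.
  have Ju : fine (J u) = lam * hf H u.
    by rewrite lamE /hf divfK // (gt_eqF hu0).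
  have ap : a `^ p = lam `^ q by rewrite /a -powRrM e2.
  have la : lam * a = lam `^ q.
    rewrite /a -{1}(powRr1 (ltW lam0)) -powRD; last by rewrite lamn0 implybT.
    by rewrite addrC subrK.
  have key : hf H u < eta0 u.
    have := (sH.2) (2^-1 *: u); rewrite !(HE Hfin) (hf_scale Hhom Hfin) -EFinD lee_fin.
    rewrite (@dual_B R X eta0 de0) (dual_Z de0) gtr0_norm ?invr_gt0 // => h.
    have h2a : (0 : R) < 2^-1 by rewrite invr_gt0; lra.
    have h2b : (2^-1 : R) < 1 by rewrite invf_lt1; lra.
    have h3 : 2^-1 `^ p * hf H u < 2^-1 * hf H u.
      by rewrite ltr_pM2r //; apply: powR_lt_self => //; rewrite h2a h2b.
    lra.
  split => //; split => //; split; first exact: (@FY_sub R X J J0 zeta u sJ Jfin).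
  split.
    rewrite Js Hs; split => //; split => //; split.
      rewrite gt_eqF // lte_fin zau -/(hf H (a *: u)) hau ap la -mulrBr mulr_gt0 ?powR_gt0 //.
      by rewrite subr_gt0.
    rewrite /= zu Ju zau -/(hf H (a *: u)) hau ap la -!mulrBr -mulf_div divff ?mulr1; last first.
      by rewrite gt_eqF // subr_gt0.
    by rewrite /mu powRB ?lamn0 ?implybT // powRr1 ?ltW.
  exists (a *: u); split; first exact: (@FY_sub R X H H0 zeta (a *: u) sHw (Hfin _)).
  rewrite scalerA /mu /a -powRD; last by rewrite lamn0 implybT.
  have -> : 1 - q + (q - 1) = 0 by ring.
  by rewrite powRr0 scale1r.
- case=> _ [_ [sdJ [[Jsfin [Hsfin [Hsn muE]]] [w [sdH uE]]]]].
  have [sJ JuE] := @FM_subdiff R X J J0 Jpr Jcv Jlsc zeta u dz Jsfin sdJ.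
  have [sHw HwE] := @FM_subdiff R X H H0 Hpr Hcv Hlsc zeta w dz Hsfin sdH.
  have cH0 : fine (fconj H zeta) != 0.
    by apply: contra Hsn => /eqP h; apply/eqP; rewrite -(fineK Hsfin) h.
  have cJE : fine (fconj J zeta) = mu * fine (fconj H zeta) by rewrite muE divfK.
  have hwE : hf H w = zeta w - fine (fconj H zeta) by rewrite /hf HwE.
  have zu : zeta u = mu * zeta w by rewrite uE (dual_Z dz).
  have huw : hf H u = mu `^ p * hf H w by rewrite uE (hf_scale Hhom Hfin) gtr0_norm.
  have hw0 : hf H w != 0.
    by apply/negP => /eqP h; move: hu0; rewrite huw h mulr0 ltxx.
  have Ju : fine (J u) = mu * hf H w by rewrite JuE /= zu cJE hwE; ring.
  have mup : mu `^ (p - 1) = lam^-1 by rewrite /mu -powRrM e3 powR_inv1 ?ltW.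
  have m1 : mu `^ (1 - p) = lam by rewrite /mu -powRrM e4 powRr1 ?ltW.
  have mu1p : mu / mu `^ p = lam.
    by rewrite -m1 powRB ?(gt_eqF mu0) ?implybT // powRr1 ?ltW.
  split => //; split => //; split.
    split; first by rewrite JuE.
    split; first exact: Hfin.
    split; first by rewrite (HE Hfin) gt_eqF // lte_fin.
    by rewrite Ju -/(hf H u) huw -mulf_div divff // mulr1 mu1p.
  exists (fun x => lam^-1 * zeta x); split.
    by have := @scale_sub R X p H p1 Hhom Hfin mu w zeta mu0 sHw; rewrite -uE mup.
  by apply: funext => x; rewrite mulrA mulfV // mul1r.
Qed.
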